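(* Let $q$ be a prime number and $1\le i<q$ with $i/q\le1/2$. Then $\mathsf{L}^i_q$, with its signature expanded by the (term-definable) implication $\Rightarrow^i_q$, is a $(q+1)$-valued ideal paraconsistent logic (with respect to Łukasiewicz negation $\neg$ and the implication $\Rightarrow^i_q$).
   Context: $\mathbf{ŁV}_{q+1}=(\{0,\frac1q,\dots,1\},\neg,\to)$ with $\neg x=1-x$, $x\to y=\min\{1,1-x+y\}$, $x\vee y=\max\{x,y\}$ (definable as $(x\to y)\to y$). $F_{i/q}=\{x:x\ge i/q\}$ and $\mathsf{L}^i_q=\langle\mathbf{ŁV}_{q+1},F_{i/q}\rangle$ (matrix consequence). ${\sim}^i_q$ is a term-definable unary connective with ${\sim}^i_q x=0$ if $x\ge i/q$ and $1$ otherwise, and $\varphi\Rightarrow^i_q\psi:={\sim}^i_q\varphi\vee\psi$. A logic $L$ over a signature $\Theta$ with unary $\neg$ and binary $\to$ is an ideal paraconsistent logic if: (i) it is $\neg$-paraconsistent ($\varphi,\neg\varphi\nvdash_L\psi$ for some $\varphi,\psi$); (ii) $\to$ satisfies the deduction-detachment theorem ($\Gamma\cup\{\varphi\}\vdash_L\psi$ iff $\Gamma\vdash_L\varphi\to\psi$); (iii) there is a presentation $L'=\langle\mathbf{A},\{1\}\rangle$ of classical logic over $\Theta$ with universe $\{0,1\}$ where $\neg,\to$ are classical negation and implication; (iv) ${\vdash_L}\subseteq{\vdash_{L'}}$; and moreover $L$ is maximal w.r.t. $L'$ (proper sublogic such that adding any $L'$-theorem not provable in $L$, with all its substitution instances,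 yields $L'$) and every proper extension of $L$ over $\Theta$ is not $\neg$-paraconsistent. *)

(* Defs.v *)
From mathcomp Require Import all_boot.
Unset Printing Implicit Defensive.

Inductive form : Type :=
| Var  : nat -> form
| Neg  : form -> form
| LImp : form -> form -> form
| Imp  : form -> form -> form.

Fixpoint subst (s : nat -> form) (f : form) : form :=
  match f with
  | Var n => s n
  | Neg a => Neg (subst s a)
  | LImp a b => LImp (subst s a) (subst s b)
  | Imp a b => Imp (subst s a) (subst s b)
  end.

Definition fset := form -> Prop.
Definition cons := fset -> form -> Prop.

Definition set_empty : fset := fun _ => False.
Definition set_union (A B : fset) : fset := fun f => A f \/ B f.
Definition set_add (A : fset) (a : form) : fset := fun f => A f \/ f = a.
Definition set_pair (a b : form) : fset := fun f => f = a \/ f = b.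
Definition set_image (s : nat -> form) (A : fset) : fset :=
  fun f => exists g, A g /\ f = subst s g.
Definition instances (a : form) : fset := fun f => exists s, f = subst s a.

Fixpoint eval {T : Type} (ng : T -> T) (li im : T -> T -> T) (v : nat -> T)
  (f : form) : T :=
  match f with
  | Var n => v n
  | Neg a => ng (eval ng li im v a)
  | LImp a b => li (eval ng li im v a) (eval ng li im v b)
  | Imp a b => im (eval ng li im v a) (eval ng li im v b)
  end.

Definition matrix_cons {T : Type} (ng : T -> T) (li im : T -> T -> T)
  (D : T -> Prop) : cons :=
  fun G f => forall v : nat -> T,
    (forall g, G g -> D (eval ng li im v g)) -> D (eval ng li im v f).

(* LV_{q+1}: the value k : 'I_q.+1 represents k/q. *)
Definition luk_neg (q : nat) (x : 'I_q.+1) : 'I_q.+1 := inord (q - x).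
Definition luk_imp (q : nat) (x y : 'I_q.+1) : 'I_q.+1 := inord (minn q (q - x + y)).
(* ~^i_q x = 0 if x >= i/q, 1 otherwise; x =>^i_q y = max(~^i_q x, y). *)
Definition luk_tilde (q i : nat) (x : 'I_q.+1) : nat := if i <= x then 0 else q.
Definition luk_impi (q i : nat) (x y : 'I_q.+1) : 'I_q.+1 :=
  inord (maxn (luk_tilde q i x) y).
Definition luk_filter (q i : nat) (x : 'I_q.+1) : Prop := i <= x.

Definition Lqi (q i : nat) : cons :=
  matrix_cons (@luk_neg q) (@luk_imp q) (@luk_impi q i) (@luk_filter q i).

(* Two-valued presentation of classical logic over Theta: neg and the
   designated implication Imp are classical; LImp is interpreted by some
   boolean function li. *)
Definition classical_pres (li : bool -> bool -> bool) : cons :=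
  matrix_cons negb li implb (fun b => b = true).

Definition is_logic (C : cons) : Prop :=
  (forall G f, G f -> C G f) /\
  (forall G D f, (forall g, G g -> D g) -> C G f -> C D f) /\
  (forall G D f, (forall g, D g -> C G g) -> C (set_union G D) f -> C G f) /\
  (forall G f s, C G f -> C (set_image s G) (subst s f)).

Definition subrel (C C' : cons) : Prop := forall G f, C G f -> C' G f.

Definition neg_paraconsistent (C : cons) : Prop :=
  exists f g, ~ C (set_pair f (Neg f)) g.

Definition deduction_detachment (C : cons) : Prop :=
  forall G f g, C (set_add G f) g <-> C G (Imp f g).

Definition add_axiom (C : cons) (a : form) : cons :=
  fun G f => C (set_union G (instances a)) f.

Definition maximal_wrt (C C' : cons) : Prop :=
  subrel C C' /\ ~ subrel C' C /\
  forall a, C' set_empty a -> ~ C set_empty a ->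
    forall G f, add_axiom C a G f <-> C' G f.

Definition ideal_paraconsistent (C : cons) : Prop :=
  is_logic C /\
  neg_paraconsistent C /\
  deduction_detachment C /\
  (exists li : bool -> bool -> bool,
      subrel C (classical_pres li) /\ maximal_wrt C (classical_pres li)) /\
  (forall C'', is_logic C'' -> subrel C C'' -> ~ subrel C'' C ->
      ~ neg_paraconsistent C'').

(* Main.v *)
Require Import Defs.
From mathcomp Require Import all_boot.
From mathcomp Require Import zify.
From Stdlib Require Import Classical.

Definition E (q i : nat) (v : nat -> 'I_q.+1) (A : form) : 'I_q.+1 :=
  eval (@luk_neg q) (@luk_imp q) (@luk_impi q i) v A.

Lemma E_le q i v A : (E q i v A : nat) <= q.
Proof. by rewrite -ltnS ltn_ord. Qed.

Lemma E_neg q i v A : (E q i v (Neg A) : nat) = q - E q i v A.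
Proof. rewrite /E /= /luk_neg inordK //; lia. Qed.

Lemma E_limp q i v A B :
  (E q i v (LImp A B) : nat) = minn q (q - E q i v A + E q i v B).
Proof. rewrite /E /= /luk_imp inordK //; lia. Qed.

Lemma val_impi q i (x y : 'I_q.+1) :
  (luk_impi q i x y : nat) = maxn (if i <= x then 0 else q) y.
Proof.
rewrite /luk_impi /luk_tilde inordK //.
have := ltn_ord y; case: ifP => _; lia.
Qed.

Lemma E_imp q i v A B :
  (E q i v (Imp A B) : nat) =
    maxn (if i <= E q i v A then 0 else q) (E q i v B).
Proof. by rewrite /E /= val_impi. Qed.

Definition top A := LImp A A.
Definition bot A := Neg (top A).
Definition oplus A B := LImp (Neg A) B.
Definition odot A B := Neg (oplus (Neg A) (Neg B)).
Definition minus A B := odot A (Neg B).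
Fixpoint nsum n D := match n with 0 => bot D | n'.+1 => oplus D (nsum n' D) end.
Definition sel C A B := oplus (odot C A) (odot (Neg C) B).
Definition step (q : nat) (p : form * form) :=
  let (A, B) := p in
  (sel (nsum q (minus A B)) (minus A B) A, sel (nsum q (minus B A)) (minus B A) B).
Definition delta q A := (iter (2 * q) (step q) (A, top A)).1.
Definition K q c A := nsum c (delta q A).

Lemma E_top q i v A : (E q i v (top A) : nat) = q.
Proof. rewrite E_limp; have := E_le q i v A; lia. Qed.
Lemma E_bot q i v A : (E q i v (bot A) : nat) = 0.
Proof. by rewrite E_neg E_top subnn. Qed.
Lemma E_oplus q i v A B : (E q i v (oplus A B) : nat) = minn q (E q i v A + E q i v B).
Proof. rewrite E_limp E_neg; have := E_le q i v A; lia. Qed.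
Lemma E_odot q i v A B : (E q i v (odot A B) : nat) = E q i v A + E q i v B - q.
Proof. rewrite E_neg E_oplus !E_neg; have := E_le q i v A; have := E_le q i v B; lia. Qed.
Lemma E_minus q i v A B : (E q i v (minus A B) : nat) = E q i v A - E q i v B.
Proof. rewrite E_odot E_neg; have := E_le q i v A; have := E_le q i v B; lia. Qed.
Lemma E_nsum q i v n D : (E q i v (nsum n D) : nat) = minn q (n * E q i v D).
Proof.
elim: n => [|n IH] /=; first by rewrite E_bot mul0n minn0.
rewrite E_oplus IH mulSn; lia.
Qed.
Lemma E_pos q i v A :
  (E q i v (nsum q A) : nat) = if 0 < E q i v A then q else 0.
Proof.
rewrite E_nsum; case: (E q i v A : nat) => [|a]; first by rewrite muln0 minn0.
rewrite mulnS /=; lia.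
Qed.
Lemma E_sel q i v X A B :
  (E q i v (sel (nsum q X) A B) : nat) =
  if 0 < E q i v X then E q i v A else E q i v B.
Proof.
rewrite E_oplus !E_odot E_neg E_pos.
have := E_le q i v A; have := E_le q i v B.
case: ifP => _; lia.
Qed.

Definition fstep (p : nat * nat) :=
  let (a, b) := p in (if b < a then a - b else a, if a < b then b - a else b).

Lemma E_iter q i v n A B :
  let p := iter n (step q) (A, B) in
  (E q i v p.1 : nat, E q i v p.2 : nat) = iter n fstep (E q i v A : nat, E q i v B : nat).
Proof.
elim: n => [|n IH] //=.
move: IH; case: (iter n (step q) (A, B)) => A' B' /= <- /=.
rewrite !E_sel !E_minus !subn_gt0.
congr pair; case: ifP => _ //; by rewrite E_minus.
Qed.

Lemma iter_fix n a : iter n fstep (a, a) = (a, a).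
Proof. by elim: n => //= n ->; rewrite /= ltnn. Qed.

Lemma euclid n a b : 0 < a -> 0 < b -> a + b <= n + 2 ->
  iter n fstep (a, b) = (gcdn a b, gcdn a b).
Proof.
elim: n a b => [|n IH] a b Ha Hb Hs.
  have Ea : a = 1 by lia.
  have Eb : b = 1 by lia.
  by subst.
rewrite iterSr /=.
case: (ltngtP a b) => H.
- rewrite IH; [|lia|lia|lia].
  have -> : gcdn a (b - a) = gcdn a b; last by [].
  by rewrite -(gcdnDl a (b - a)) subnKC // ltnW.
- rewrite IH; [|lia|lia|lia].
  have -> : gcdn (a - b) b = gcdn a b; last by [].
  by rewrite gcdnC -(gcdnDl b (a - b)) subnKC 1?gcdnC // ltnW.
- by subst; rewrite iter_fix gcdnn.
Qed.

Lemma E_delta q i v A : prime q -> 0 < E q i v A < q -> (E q i v (delta q A) : nat) = 1.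
Proof.
move=> Hp /andP[H0 H1].
rewrite /delta.
have := E_iter q i v (2 * q) A (top A).
case: (iter (2 * q) (step q) (A, top A)) => A' B' /=.
rewrite E_top euclid; [|lia|lia|lia].
case=> -> _.
have: coprime q (E q i v A) by rewrite prime_coprime // (contra (dvdn_leq H0)) // -ltnNge.
by rewrite /coprime gcdnC => /eqP.
Qed.

Lemma E_K q i v A c : prime q -> 0 < E q i v A < q -> c <= q ->
  (E q i v (K q c A) : nat) = c.
Proof. move=> Hp HA Hc; rewrite /K E_nsum E_delta // muln1; lia. Qed.

Lemma eval_subst {T : Type} (ng : T -> T) (li im : T -> T -> T) v s f :
  eval ng li im v (subst s f) = eval ng li im (fun n => eval ng li im v (s n)) f.
Proof. by elim: f => //= [f ->|f1 -> f2 ->|f1 -> f2 ->]. Qed.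

Lemma eval_ext {T : Type} (ng : T -> T) (li im : T -> T -> T) v v' f :
  (forall n, v n = v' n) -> eval ng li im v f = eval ng li im v' f.
Proof. by move=> H; elim: f => //= [f ->|f1 -> f2 ->|f1 -> f2 ->]. Qed.

Lemma K_subst q i (v w : nat -> 'I_q.+1) n0 g : prime q -> 0 < v n0 < q ->
  E q i v (subst (fun m => K q (w m) (Var n0)) g) = E q i w g.
Proof.
move=> Hp Hv; rewrite /E eval_subst; apply: eval_ext => m; apply: ord_inj.
have := E_K q i v (Var n0) (w m) Hp Hv; rewrite -ltnS ltn_ord => /(_ isT).
by rewrite /E.
Qed.

Definition emb q (b : bool) : 'I_q.+1 := if b then ord_max else ord0.

Lemma E_emb q i b f : 1 <= i <= q ->
  E q i (fun n => emb q (b n)) f = emb q (eval negb implb implb b f).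
Proof.
move=> /andP[H1 H2].
elim: f => [n|f IH|f1 IH1 f2 IH2|f1 IH1 f2 IH2]; apply: ord_inj; first by [].
- rewrite E_neg IH /=; case: (eval negb implb implb b f) => /=; lia.
- rewrite E_limp IH1 IH2 /=.
  case: (eval negb implb implb b f1); case: (eval negb implb implb b f2) => /=; lia.
- rewrite E_imp IH1 IH2 /=.
  case: (eval negb implb implb b f1); case: (eval negb implb implb b f2) => /=;
  rewrite ?H2 ?leqn0; try lia;
  (have -> : (i == 0) = false by lia); lia.
Qed.

Lemma emb_filter q i b : 1 <= i <= q -> (i <= emb q b) = b.
Proof. by move=> /andP[H1 H2]; case: b => /=; lia. Qed.

Theorem proposition6p1 (q i : nat) :
  prime q -> 1 <= i -> i < q -> i.*2 <= q ->
  ideal_paraconsistent (Lqi q i).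
Proof.
move=> Hp Hi1 Hiq Hi2.
have Hiq' : 1 <= i <= q by apply/andP; split => //; exact: ltnW.
have Hf : forall G f, Lqi q i G f <->
   (forall v, (forall g, G g -> i <= E q i v g) -> i <= E q i v f) by [].
have Hcl : forall G f, classical_pres implb G f <->
   (forall b, (forall g, G g -> eval negb implb implb b g = true) ->
      eval negb implb implb b f = true) by [].
have Hpara : ~ Lqi q i (set_pair (Var 0) (Neg (Var 0))) (Var 1).
  move/Hf=> H.
  have Ei : ((inord i : 'I_q.+1) : nat) = i by rewrite inordK // ltnS ltnW.
  have := H (fun n => if n is 0 then inord i else ord0).
  have Hv : forall g, set_pair (Var 0) (Neg (Var 0)) g ->
     i <= E q i (fun n => if n is 0 then inord i else ord0) g.
    move=> g [->|->].
    - by rewrite /E /= Ei.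
    - by rewrite E_neg /E /= Ei; lia.
  move=> /(_ Hv); rewrite /E /=; lia.
have Hlog : forall G f, Lqi q i G f -> classical_pres implb G f.
  move=> G f /Hf H; apply/Hcl => b Hb.
  have := H (fun n => emb q (b n)).
  rewrite E_emb // emb_filter //; apply=> g Gg.
  by rewrite E_emb // emb_filter // Hb.
have Hcv : forall G f, ~ Lqi q i G f -> exists w,
    (forall g, G g -> i <= E q i w g) /\ ~ i <= E q i w f.
  move=> G f Hn; apply: NNPP => Hne; apply: Hn; apply/Hf => v Hv.
  apply: NNPP => Hvf; apply: Hne; by exists v.
split; [|split; [|split; [|split]]].
-
  split; [|split; [|split]].
  + by move=> G f Gf; apply/Hf => v Hv; exact: Hv.
  + move=> G D f HGD /Hf H; apply/Hf => v Hv; apply: H => g Gg; exact: Hv (HGD g Gg).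
  + move=> G D f HD /Hf H; apply/Hf => v Hv; apply: H => g [Gg|Dg]; first exact: Hv.
    by move: (HD g Dg) => /Hf; apply.
  + move=> G f s /Hf H; apply/Hf => v Hv.
    rewrite /E eval_subst; apply: H => g Gg.
    by have := Hv (subst s g) (ex_intro _ g (conj Gg erefl)); rewrite /E eval_subst.
- by exists (Var 0), (Var 1).
- move=> G f g; split.
  + move/Hf => H; apply/Hf => v Hv; rewrite E_imp.
    case: ifP => Hvf; last by have := E_le q i v g; lia.
    have := H v; rewrite max0n; apply => h [Gh|->] //; exact: Hv.
  + move/Hf => H; apply/Hf => v Hv.
    have := H v (fun h Gh => Hv h (or_introl Gh)); rewrite E_imp.
    by rewrite (Hv f (or_intror erefl)) max0n.
- exists implb; split => //; split => //; split.
  + move=> Hsub; apply: Hpara; apply: Hsub; apply/Hcl => b Hb.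
    have := Hb (Var 0) (or_introl erefl); have := Hb (Neg (Var 0)) (or_intror erefl).
    by rewrite /=; case: (b 0).
  + move=> a Hca Hna G f; split.
    * move=> H; apply/Hcl => b Hb; move: (Hlog _ _ H) => /Hcl; apply.
      move=> g [Gg|[s ->]]; first exact: Hb.
      rewrite eval_subst; by move: Hca => /Hcl; apply.
    * move=> /Hcl H; apply/Hf => v Hv.
      have [w [_ Hw]] := Hcv _ _ Hna.
      have Hbool : forall n, v n = emb q (0 < v n).
        move=> n; apply: ord_inj.
        case: (boolP (0 < v n < q)) => Hn.
        - exfalso; apply: Hw; rewrite -(K_subst q i v w n a Hp Hn).
          apply: Hv; right; by exists (fun m => K q (w m) (Var n)).
        - have := ltn_ord (v n); rewrite /emb; case: ifP => /=; lia.
      have Ev : forall h, E q i v h = E q i (fun n => emb q (0 < v n)) h.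
        by move=> h; apply: eval_ext.
      rewrite Ev E_emb // emb_filter //.
      apply: H => g Gg; have := Hv g (or_introl Gg).
      by rewrite Ev E_emb // emb_filter.
- move=> C [_ [Cmon [Ccut Cstr]]] Hsub Hnsub Hpc.
  have [G [f [CGf HnL]]] : exists G f, C G f /\ ~ Lqi q i G f.
    apply: NNPP => Hne; apply: Hnsub => G f CGf; apply: NNPP => Hn; apply: Hne.
    by exists G, f.
  have [w [HwG Hwf]] := Hcv _ _ HnL.
  set P := set_pair (Var 0) (Neg (Var 0)).
  set sg := fun m => K q (w m) (Var 0).
  have HP : forall v, (forall g, P g -> i <= E q i v g) -> 0 < v 0 < q.
    move=> v Hv; have := Hv _ (or_introl erefl); have := Hv _ (or_intror erefl).
    rewrite E_neg /E /=; have := ltn_ord (v 0); lia.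
  have S1 : C (set_image sg G) (subst sg f) by apply: Cstr.
  have S2 : forall g, set_image sg G g -> C P g.
    move=> g [g0 [Gg0 ->]]; apply: Hsub; apply/Hf => v Hv.
    rewrite K_subst //; [exact: HwG | exact: HP].
  have S3 : C P (subst sg f).
    apply: (Ccut _ (set_image sg G)) => //; apply: (Cmon _ _ _ _ S1) => g Hg; by right.
  have S4 : C (set_union P (fun x => x = subst sg f)) (Var 1).
    apply: Hsub; apply/Hf => v Hv; exfalso; apply: Hwf.
    rewrite -(K_subst q i v w 0 f Hp); first exact: Hv (or_intror erefl).
    by apply: HP => g Pg; apply: Hv; left.
  have S5 : C P (Var 1) by apply: (Ccut _ _ _ _ S4) => g ->.
  case: Hpc => f0 [g0]; apply.
  pose s := fun n : nat => if n is 0 then f0 else g0.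
  have := Cstr _ _ s S5; apply: Cmon => g [h [[->|->] ->]] /=; by [left|right].
Qed.
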